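(* Let $\mathbb{K}$ be a field of characteristic $2$, let $(A,\cdot,\{-,-\},(-)^{\{2\}})$ be a restricted Poisson algebra, let $k\ge1$, and let $(A^t_k,\cdot,\mu_{(k)},\omega_{(k)})$ be a formal deformation of order $k$ of $A$, with $\mu_{(k)}=\{-,-\}+\sum_{i=1}^kt^i\mu_i$ and $\omega_{(k)}=(-)^{\{2\}}+\sum_{i=1}^kt^i\omega_i$. Then $(\mu_1,\omega_1)\in Z^2_{\rm PA}(A)$.
   Context: $\mathbb{K}$ has characteristic $2$. Restricted Poisson algebra: commutative associative $(A,\cdot)$ with Lie bracket satisfying $\{ab,c\}=a\{b,c\}+b\{a,c\}$, and a map $(-)^{\{2\}}$ with $(\lambda x)^{\{2\}}=\lambda^2x^{\{2\}}$, $\mathrm{ad}_{x^{\{2\}}}=\mathrm{ad}_x^2$, $(x+y)^{\{2\}}=x^{\{2\}}+y^{\{2\}}+\{x,y\}$, $(xy)^{\{2\}}=x^2y^{\{2\}}+y^2x^{\{2\}}+xy\{x,y\}$. $\mathfrak{X}^n(A)$: alternating $n$-linear maps $A^n\to A$ that are derivations of $\cdot$ in each argument. $C^2_{\rm PA}(A)$: pairs $(\varphi,\omega)$, $\varphi\in\mathfrak{X}^2(A)$, $\omega:A\to A$ with $\omega(\lambda x)=\lambda^2\omega(x)$, $\omega(x+y)=\omega(x)+\omega(y)+\varphi(x,y)$, $\omega(xy)=x^2\omega(y)+y^2\omega(x)+xy\varphi(x,y)$. $Z^2_{\rm PA}(A)$: those with $\mathrm{d}^2(\varphi,\omega)=0$,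 where $\mathrm{d}^2(\varphi,\omega)=(\mathrm{d}_{\rm CE}\varphi,\delta^2\omega)$, $\mathrm{d}_{\rm CE}\varphi(x,y,z)=\varphi(\{x,y\},z)+\varphi(\{x,z\},y)+\varphi(\{y,z\},x)+\{x,\varphi(y,z)\}+\{y,\varphi(x,z)\}+\{z,\varphi(x,y)\}$ and $\delta^2\omega(x,z)=\{x,\varphi(x,z)\}+\{z,\omega(x)\}+\varphi(x^{\{2\}},z)+\varphi(\{x,z\},x)$. $\mathbb{K}^t_k=\mathbb{K}[t]/(t^{k+1})$, $A^t_k=A\otimes\mathbb{K}^t_k$. A formal deformation of order $k$: $(\mu_i,\omega_i)\in C^2_{\rm PA}(A)$ for all $i$, such that $(A^t_k,\mu_{(k)},\omega_{(k)})$ is a restricted Lie algebra over $\mathbb{K}^t_k$ ($\mu_{(k)}$ extended $\mathbb{K}^t_k$-bilinearly, $\omega_{(k)}$ extended by $\omega(\lambda X)=\lambda^2\omega(X)$, $\omega(X+Y)=\omega(X)+\omega(Y)+\mu(X,Y)$). *)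

(* Defs.v *)
From HB Require Import structures.
From mathcomp Require Import all_boot all_order all_algebra.
Set Implicit Arguments. Unset Strict Implicit. Unset Printing Implicit Defensive.
Import GRing.Theory.
Local Open Scope ring_scope.

(* Generic restricted Lie algebra (characteristic 2 conventions) over a
   scalar "ring" S given by its multiplication smul, acting on the
   Z-module V by scale. *)
Definition restricted_Lie (S : Type) (smul : S -> S -> S) (V : zmodType)
  (scale : S -> V -> V) (br : V -> V -> V) (w : V -> V) : Prop :=
  (forall a x y z, br (scale a x + y) z = scale a (br x z) + br y z) /\
  (forall a x y z, br z (scale a x + y) = scale a (br z x) + br z y) /\
  (forall x, br x x = 0) /\
  (forall x y z, br x (br y z) + br y (br z x) + br z (br x y) = 0) /\
  (forall a x, w (scale a x) = scale (smul a a) (w x)) /\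
  (forall x y, w (x + y) = w x + w y + br x y) /\
  (forall x y, br (w x) y = br x (br x y)).

Definition restricted_Poisson (K : fieldType) (A : comAlgType K)
  (br : A -> A -> A) (p : A -> A) : Prop :=
  [/\ restricted_Lie (fun a b : K => a * b) (fun (a : K) (x : A) => a *: x) br p,
      (forall a b c, br (a * b) c = a * br b c + b * br a c)
    & (forall x y, p (x * y) = x ^+ 2 * p y + y ^+ 2 * p x + x * y * br x y)].

Definition biderivation (K : fieldType) (A : comAlgType K) (phi : A -> A -> A) : Prop :=
  [/\ (forall (a : K) x y z, phi (a *: x + y) z = a *: phi x z + phi y z),
      (forall (a : K) x y z, phi z (a *: x + y) = a *: phi z x + phi z y),
      (forall x, phi x x = 0),
      (forall a b c, phi (a * b) c = a * phi b c + b * phi a c)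
    & (forall a b c, phi c (a * b) = a * phi c b + b * phi c a)].

Definition C2PA (K : fieldType) (A : comAlgType K) (phi : A -> A -> A) (w : A -> A) : Prop :=
  [/\ biderivation phi,
      (forall (a : K) x, w (a *: x) = (a ^+ 2) *: w x),
      (forall x y, w (x + y) = w x + w y + phi x y)
    & (forall x y, w (x * y) = x ^+ 2 * w y + y ^+ 2 * w x + x * y * phi x y)].

Definition dCE (K : fieldType) (A : comAlgType K) (br : A -> A -> A)
  (phi : A -> A -> A) (x y z : A) : A :=
  phi (br x y) z + phi (br x z) y + phi (br y z) x
  + br x (phi y z) + br y (phi x z) + br z (phi x y).

Definition delta2 (K : fieldType) (A : comAlgType K) (br : A -> A -> A) (p : A -> A)
  (phi : A -> A -> A) (w : A -> A) (x z : A) : A :=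
  br x (phi x z) + br z (w x) + phi (p x) z + phi (br x z) x.

Definition Z2PA (K : fieldType) (A : comAlgType K) (br : A -> A -> A) (p : A -> A)
  (phi : A -> A -> A) (w : A -> A) : Prop :=
  [/\ C2PA phi w,
      (forall x y z, dCE br phi x y z = 0)
    & (forall x z, delta2 br p phi w x z = 0)].

(* K^t_k = K[t]/(t^(k+1)), elements = coefficient vectors indexed by 'I_k.+1 *)
Definition Kt (K : fieldType) (k : nat) := {ffun 'I_k.+1 -> K}.
(* A^t_k = A (x) K^t_k *)
Definition At (K : fieldType) (A : comAlgType K) (k : nat) := {ffun 'I_k.+1 -> A}.

Definition Kt_mul (K : fieldType) (k : nat) (a b : Kt K k) : Kt K k :=
  [ffun n : 'I_k.+1 => \sum_(i < k.+1) \sum_(j < k.+1 | (i + j == n)%N) a i * b j].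

Definition At_scale (K : fieldType) (A : comAlgType K) (k : nat) (a : Kt K k)
  (X : At A k) : At A k :=
  [ffun n : 'I_k.+1 => \sum_(i < k.+1) \sum_(j < k.+1 | (i + j == n)%N) a i *: X j].

Definition full_mu (K : fieldType) (A : comAlgType K) (br : A -> A -> A)
  (mu : nat -> A -> A -> A) (i : nat) : A -> A -> A :=
  if i == 0%N then br else mu i.
Definition full_om (K : fieldType) (A : comAlgType K) (p : A -> A)
  (om : nat -> A -> A) (i : nat) : A -> A :=
  if i == 0%N then p else om i.

(* mu_(k) extended K^t_k-bilinearly *)
Definition mu_k (K : fieldType) (A : comAlgType K) (br : A -> A -> A)
  (mu : nat -> A -> A -> A) (k : nat) (X Y : At A k) : At A k :=
  [ffun n : 'I_k.+1 => \sum_(i < k.+1) \sum_(j < k.+1) \sum_(l < k.+1 | (i + j + l == n)%N)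
      full_mu br mu i (X j) (Y l)].

(* omega_(k) extended by omega(lambda X) = lambda^2 omega(X) and
   omega(X+Y) = omega(X) + omega(Y) + mu(X,Y):
   omega(sum_j t^j X_j) = sum_{i,j} t^(i+2j) omega_i(X_j)
                         + sum_{i, j<l} t^(i+j+l) mu_i(X_j, X_l). *)
Definition om_k (K : fieldType) (A : comAlgType K) (br : A -> A -> A) (p : A -> A)
  (mu : nat -> A -> A -> A) (om : nat -> A -> A) (k : nat) (X : At A k) : At A k :=
  [ffun n : 'I_k.+1 =>
      \sum_(i < k.+1) \sum_(j < k.+1 | (i + 2 * j == n)%N) full_om p om i (X j)
    + \sum_(i < k.+1) \sum_(j < k.+1) \sum_(l < k.+1 | (j < l)%N && (i + j + l == n)%N)
        full_mu br mu i (X j) (X l)].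

Definition formal_deformation (K : fieldType) (A : comAlgType K)
  (br : A -> A -> A) (p : A -> A) (k : nat)
  (mu : nat -> A -> A -> A) (om : nat -> A -> A) : Prop :=
  (forall i, (1 <= i <= k)%N -> C2PA (mu i) (om i)) /\
  restricted_Lie (@Kt_mul K k) (@At_scale K A k) (mu_k br mu (k:=k)) (om_k br p mu om (k:=k)).

(* Main.v *)
Require Import Defs.
From mathcomp Require Import all_boot all_order all_algebra.
From mathcomp Require Import ring.
Local Open Scope ring_scope.
Import GRing.Theory.

Lemma fD (I : finType) (V : zmodType) (f g : {ffun I -> V}) i : (f + g) i = f i + g i.
Proof. by rewrite /GRing.add /= ffunE. Qed.
Lemma f0 (I : finType) (V : zmodType) i : (0 : {ffun I -> V}) i = 0.
Proof. by rewrite /GRing.zero /= ffunE. Qed.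

Lemma sum_at (V : zmodType) n (j : 'I_n) (P : pred 'I_n) (F : 'I_n -> V) :
  (forall i, i != j -> P i -> F i = 0) ->
  \sum_(i | P i) F i = if P j then F j else 0.
Proof.
move=> H; case Pj: (P j).
  rewrite (bigD1 j) //= big1 ?addr0 // => i /andP[Pi ne]; exact: H.
rewrite big1 // => i Pi; apply: H => //; apply/eqP => e.
by rewrite -e Pi in Pj.
Qed.

Lemma sum_at1 (V : zmodType) n (j : 'I_n) (F : 'I_n -> V) :
  (forall i, i != j -> F i = 0) -> \sum_i F i = F j.
Proof. by move=> H; rewrite (@sum_at V n j xpredT) // => i ne _; apply: H. Qed.

Lemma lin0 (K : fieldType) (A : comAlgType K) (f : A -> A -> A) :
  (forall (a : K) x y z, f (a *: x + y) z = a *: f x z + f y z) -> forall z, f 0 z = 0.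
Proof.
move=> L z; have := L (-1) 0 0 z; rewrite scaleN1r addNr => ->.
by rewrite scaleN1r addNr.
Qed.
Lemma lin0r (K : fieldType) (A : comAlgType K) (f : A -> A -> A) :
  (forall (a : K) x y z, f z (a *: x + y) = a *: f z x + f z y) -> forall z, f z 0 = 0.
Proof.
move=> L z; have := L (-1) 0 0 z; rewrite scaleN1r addNr => ->.
by rewrite scaleN1r addNr.
Qed.

Lemma symm2 (K : fieldType) (A : comAlgType K) (f : A -> A -> A) :
  (2%N \in [pchar K]) ->
  (forall (a : K) x y z, f (a *: x + y) z = a *: f x z + f y z) ->
  (forall (a : K) x y z, f z (a *: x + y) = a *: f z x + f z y) ->
  (forall x, f x x = 0) -> forall x y, f x y = f y x.
Proof.
move=> ch L R Al x y.
have Ad1 u v w : f (u + v) w = f u w + f v w by have := L 1 u v w; rewrite !scale1r.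
have Ad2 u v w : f w (u + v) = f w u + f w v by have := R 1 u v w; rewrite !scale1r.
have := Al (x + y); rewrite Ad1 !Ad2 !Al add0r addr0 => h.
have c2 : forall a : A, a + a = 0.
  by move=> a; rewrite -[a]scale1r -scalerDl -[1 + 1]/(2%:R) (pcharf0 ch) scale0r.
by apply/eqP; rewrite -subr_eq0 -[f y x](addrK (f y x)) c2 sub0r opprK h.
Qed.

Section Main.
Variables (K : fieldType) (A : comAlgType K) (br : A -> A -> A) (p : A -> A) (k : nat)
  (mu : nat -> A -> A -> A) (om : nat -> A -> A).
Hypothesis hk : (1 <= k)%N.
Hypothesis Lbr : forall (a : K) x y z, br (a *: x + y) z = a *: br x z + br y z.
Hypothesis Rbr : forall (a : K) x y z, br z (a *: x + y) = a *: br z x + br z y.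
Hypothesis p0 : p 0 = 0.
Hypothesis Cmu : forall i, (1 <= i <= k)%N -> C2PA (mu i) (om i).

Definition o1 : 'I_k.+1 := Ordinal (n:=k.+1) (m:=1) hk.
Definition E (x : A) : At A k := [ffun n : 'I_k.+1 => if nat_of_ord n == 0%N then x else 0].

Notation Fm := (full_mu br mu).
Notation Fo := (full_om p om).

Lemma Fm0l (i : 'I_k.+1) y : Fm i 0 y = 0.
Proof.
rewrite /full_mu; case: eqP => [_|ne]; first exact: lin0.
have : (1 <= i <= k)%N by have := ltn_ord i; rewrite ltnS => ->; rewrite andbT lt0n; apply/eqP.
by move/Cmu => [[L _ _ _ _] _ _ _]; apply: lin0.
Qed.
Lemma Fm0r (i : 'I_k.+1) y : Fm i y 0 = 0.
Proof.
rewrite /full_mu; case: eqP => [_|ne]; first exact: lin0r.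
have : (1 <= i <= k)%N by have := ltn_ord i; rewrite ltnS => ->; rewrite andbT lt0n; apply/eqP.
by move/Cmu => [[_ L _ _ _] _ _ _]; apply: lin0r.
Qed.
Lemma Fo0 (i : 'I_k.+1) : Fo i 0 = 0.
Proof.
rewrite /full_om; case: eqP => [_|ne]; first exact: p0.
have : (1 <= i <= k)%N by have := ltn_ord i; rewrite ltnS => ->; rewrite andbT lt0n; apply/eqP.
move/Cmu => [_ S _ _]; have := S 0 0; rewrite scale0r => ->.
by rewrite expr0n /= scale0r.
Qed.

Lemma E0 x : E x ord0 = x. Proof. by rewrite ffunE. Qed.
Lemma Ene x (j : 'I_k.+1) : j != ord0 -> E x j = 0.
Proof. by move=> H; rewrite ffunE ifN. Qed.

Lemma two (G : 'I_k.+1 -> 'I_k.+1 -> A) (P : 'I_k.+1 -> 'I_k.+1 -> bool) :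
  (forall i j, P i j = (i + j == 1)%N) ->
  \sum_i \sum_(j | P i j) G i j = G ord0 o1 + G o1 ord0.
Proof.
move=> HP.
have h0 : \sum_(j | P ord0 j) G ord0 j = G ord0 o1.
  rewrite (@sum_at _ _ o1) ?HP //.
  by move=> i ne; rewrite HP add0n => /eqP e; case/eqP: ne; apply: val_inj.
have h1 : \sum_(j | P o1 j) G o1 j = G o1 ord0.
  rewrite (@sum_at _ _ ord0) ?HP //.
  move=> i ne; rewrite HP => /eqP e; case/eqP: ne; apply: val_inj => /=.
  by move: e; rewrite /= add1n => -[].
have hr : forall i, i != ord0 -> i != o1 -> \sum_(j | P i j) G i j = 0.
  move=> i n0 n1; rewrite big1 // => j; rewrite HP.
  by case: i n1 n0 => [[|[|i]] Hi] //= _ _.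
rewrite (bigD1 ord0) // h0; congr (_ + _).
rewrite (bigD1 o1) // h1 big1; first by rewrite /= addr0.
by move=> i /andP[n0 n1]; exact: hr.
Qed.

Lemma mukEE x y : mu_k br mu (E x) (E y) = [ffun n : 'I_k.+1 => Fm n x y].
Proof.
apply/ffunP => n; rewrite !ffunE.
rewrite (@sum_at1 _ _ n).
  rewrite (@sum_at1 _ _ ord0); last first.
    by move=> j ne; rewrite big1 // => l _; rewrite (Ene _ _ ne) Fm0l.
  rewrite (@sum_at _ _ ord0); last by move=> l ne _; rewrite (Ene y _ ne) Fm0r.
  by rewrite /= !addn0 eqxx !E0.
move=> i ne.
rewrite (@sum_at1 _ _ ord0); last first.
  by move=> j ne'; rewrite big1 // => l _; rewrite (Ene _ _ ne') Fm0l.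
rewrite (@sum_at _ _ ord0); last by move=> l ne' _; rewrite (Ene y _ ne') Fm0r.
by rewrite /= !addn0 ifN.
Qed.

Lemma muk1L x (V : At A k) : mu_k br mu (E x) V o1 = br x (V o1) + mu 1 x (V ord0).
Proof.
rewrite ffunE.
transitivity (\sum_(i < k.+1) \sum_(l < k.+1 | (i + 0 + l == 1)%N) Fm i x (V l)).
  apply: eq_bigr => i _; rewrite (@sum_at1 _ _ ord0); first by rewrite E0.
  by move=> j ne; rewrite big1 // => l _; rewrite (Ene _ _ ne) Fm0l.
by rewrite (two (fun i l => Fm i x (V l))) // => i j; rewrite addn0.
Qed.

Lemma muk1R z (V : At A k) : mu_k br mu V (E z) o1 = br (V o1) z + mu 1 (V ord0) z.
Proof.
rewrite ffunE.
transitivity (\sum_(i < k.+1) \sum_(j < k.+1 | (i + j == 1)%N) Fm i (V j) z).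
  apply: eq_bigr => i _; rewrite [RHS]big_mkcond /=; apply: eq_bigr => j _.
  rewrite (@sum_at _ _ ord0); last by move=> l ne _; rewrite (Ene _ _ ne) Fm0r.
  by rewrite addn0 E0.
by rewrite (two (fun i j => Fm i (V j) z)).
Qed.

Lemma omkE x : om_k br p mu om (E x) = [ffun n : 'I_k.+1 => Fo n x].
Proof.
apply/ffunP => n; rewrite !ffunE.
rewrite [X in _ + X]big1 ?addr0; last first.
  move=> i _; rewrite big1 // => j _; rewrite big1 // => l /andP[jl _].
  have ln : l != ord0 by rewrite -lt0n; exact: leq_ltn_trans (leq0n _) jl.
  by rewrite (Ene _ _ ln) Fm0r.
rewrite (@sum_at1 _ _ n).
  rewrite (@sum_at _ _ ord0); last by move=> j ne _; rewrite (Ene _ _ ne) Fo0.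
  by rewrite /= muln0 addn0 eqxx E0.
move=> i ne; rewrite (@sum_at _ _ ord0); last by move=> j ne' _; rewrite (Ene _ _ ne') Fo0.
by rewrite /= muln0 addn0 ifN.
Qed.

Hypothesis ch : (2%N \in [pchar K]).
Hypothesis Abr : forall x, br x x = 0.
Hypothesis Jk : forall X Y Z : At A k, mu_k br mu X (mu_k br mu Y Z) + mu_k br mu Y (mu_k br mu Z X)
   + mu_k br mu Z (mu_k br mu X Y) = 0.
Hypothesis Wk : forall X Y : At A k, mu_k br mu (om_k br p mu om X) Y = mu_k br mu X (mu_k br mu X Y).

Lemma Z2 : Z2PA br p (mu 1%N) (om 1%N).
Proof.
have C1 : C2PA (mu 1%N) (om 1%N) by apply: Cmu; rewrite hk.
have sb := @symm2 _ _ br ch Lbr Rbr Abr.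
have sm : forall x y, mu 1%N x y = mu 1%N y x.
  by case: C1 => [[L R Al _ _] _ _ _]; apply: symm2.
have c2 : forall a : A, a + a = 0.
  by move=> a; rewrite -[a]scale1r -scalerDl -[1 + 1]/(2%:R) (pcharf0 ch) scale0r.
split => //.
- move=> x y z.
  have := congr1 (fun f : {ffun 'I_k.+1 -> A} => f o1) (Jk (E x) (E y) (E z)).
  rewrite /= !fD f0 !mukEE !muk1L !ffunE /= => J.
  rewrite /full_mu /= in J.
  rewrite (sm x (br y z)) (sm y (br z x)) (sb z x) (sm z x) (sm z (br x y)) in J.
  rewrite -[X in _ = X]J /dCE; ring.
- move=> x z.
  have := congr1 (fun f : {ffun 'I_k.+1 -> A} => f o1) (Wk (E x) (E z)).
  rewrite /= omkE muk1R mukEE muk1L !ffunE /= => W.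
  have -> : delta2 br p (mu 1%N) (om 1%N) x z = 
     (br (om 1%N x) z + mu 1%N (p x) z) + (br x (mu 1%N x z) + mu 1%N x (br x z)).
    rewrite /delta2 (sb z) (sm (br x z)). ring.
  by rewrite W c2.
Qed.

End Main.

Theorem mainTheorem15 (K : fieldType) (A : comAlgType K)
  (br : A -> A -> A) (p : A -> A) (k : nat)
  (mu : nat -> A -> A -> A) (om : nat -> A -> A) :
  (2%N \in [pchar K]) ->
  restricted_Poisson br p ->
  (1 <= k)%N ->
  formal_deformation br p k mu om ->
  Z2PA br p (mu 1%N) (om 1%N).
Proof.
move=> ch [[Lbr [Rbr [Abr [Jbr [Sp [Dp Wp]]]]]] _ _] hk [Cmu [_ [_ [_ [Jk [_ [_ Wk]]]]]]].
have p0 : p 0 = 0 by have := Sp 0 0; rewrite /= !scale0r => ->; rewrite mul0r scale0r.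
exact: (@Z2 K A br p k mu om hk Lbr Rbr p0 Cmu ch Abr Jk Wk).
Qed.
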